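(* Let $\gamma\ge1$, let $\mathcal{B}$ be a countably infinite subset of $\{z\in\mathbb{C}:\operatorname{Re}(z)\ge\gamma\}$, $\theta_b(z)=1/(z+b)$, and let $s>0$ with $\sum_{b\in\mathcal{B}}|b|^{-2s}<\infty$. Let $H\subset\mathbb{C}$ be a bounded, mildly regular open set with $H\supset G_\gamma=\{z:|z-1/(2\gamma)|<1/(2\gamma)\}$ and $\operatorname{Re}(z)>0$ on $H$. Let $L_s:C_{\mathbb{C}}(\bar H)\to C_{\mathbb{C}}(\bar H)$, $(L_sf)(z)=\sum_{b\in\mathcal{B}}|z+b|^{-2s}f(\theta_b(z))$, and let $v_s$ be a strictly positive continuous eigenfunction of $L_s$ on $\bar H$ (unique up to scalar multiples). For $R>2$ let $\mathcal{B}_R=\{b\in\mathcal{B}:|b|\le R\}$, $\mathcal{B}_R'=\{b\in\mathcal{B}:|b|>R\}$, and for $\alpha\ge0$ define $L_{s,R,\alpha}:C_{\mathbb{C}}(\bar H)\to C_{\mathbb{C}}(\bar H)$ by $$(L_{s,R,\alpha}f)(z)=\sum_{b\in\mathcal{B}_R}\frac{f(\theta_b(z))}{|z+b|^{2s}}+\alpha f(0).$$ Assume there exist $\delta_{s,R}>0$ and $\eta_{s,R}\ge0$ such that for all $z\in\bar H$ $$\eta_{s,R}v_s(0)\le\sum_{b\in\mathcal{B}_R'}\frac{1}{|z+b|^{2s}}v_s(\theta_b(z))\le\delta_{s,R}v_s(0).$$ Then, with $L_{s,R+}=L_{s,R,\delta_{s,R}}$ and $L_{s,R-}=L_{s,R,\eta_{s,R}}$,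 $$r(L_{s,R-})\le r(L_s)\le r(L_{s,R+}),$$ where $r$ denotes the spectral radius.
   Context: A bounded open set $H\subset\mathbb{R}^n$ is mildly regular if there exist $\eta>0$ and $M\ge1$ such that whenever $x,y\in H$ and $\|x-y\|<\eta$, there is a Lipschitz map $\psi:[0,1]\to H$ with $\psi(0)=x$, $\psi(1)=y$ and $\int_0^1\|\psi'(t)\|\,dt\le M\|x-y\|$. $C_{\mathbb{C}}(\bar H)$ is the space of continuous complex functions on $\bar H$ with sup norm; $r(L)=\lim_k\|L^k\|^{1/k}$. Note $0\in\bar H$. *)

(* Defs.v *)
From Stdlib Require Import Reals.
From Coquelicot Require Import Coquelicot.
From mathcomp Require Import all_boot all_algebra.
From mathcomp Require Import all_classical all_reals all_analysis.
From mathcomp Require Import Rstruct Rstruct_topology.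

Set Implicit Arguments.
Unset Strict Implicit.

Definition dnorm (psi : R -> C) (t : R) : R :=
  sqrt (Rsqr (Derive.Derive (fun u => fst (psi u)) t)
        + Rsqr (Derive.Derive (fun u => snd (psi u)) t)).

Local Open Scope ereal_scope.
Definition length_bound (psi : R -> C) (c : R) : Prop :=
  (\int[@lebesgue_measure R]_(t in `[0%R, 1%R]%classic) ((dnorm psi t)%:E))
    <= c%:E.
Local Close Scope ereal_scope.

Local Open Scope R_scope.

Definition mildly_regular (H : C -> Prop) : Prop :=
  exists (eta M : R), 0 < eta /\ 1 <= M /\
    forall x y : C, H x -> H y -> Cmod (Cminus x y) < eta ->
      exists psi : R -> C,
        (forall t, 0 <= t <= 1 -> H (psi t)) /\
        (exists K : R, forall t u, 0 <= t <= 1 -> 0 <= u <= 1 ->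
             Cmod (Cminus (psi t) (psi u)) <= K * Rabs (t - u)) /\
        psi 0 = x /\ psi 1 = y /\
        length_bound psi (M * Cmod (Cminus x y)).

Definition bounded_set (H : C -> Prop) : Prop :=
  exists M : R, forall z, H z -> Cmod z <= M.

Definition clos (H : C -> Prop) (z : C) : Prop :=
  forall eps : R, 0 < eps -> exists w, H w /\ Cmod (Cminus w z) < eps.

Definition supnorm (K : C -> Prop) (f : C -> C) : R :=
  real (Lub_Rbar (fun x => exists z, K z /\ x = Cmod (f z))).

Definition opnorm (K : C -> Prop) (L : (C -> C) -> (C -> C)) : R :=
  real (Lub_Rbar (fun x => exists f : C -> C,
     continuous_on K f /\ supnorm K f <= 1 /\ x = supnorm K (L f))).

Fixpoint opiter (k : nat) (L : (C -> C) -> (C -> C)) : (C -> C) -> (C -> C) :=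
  match k with
  | O => fun f => f
  | S k => fun f => L (opiter k L f)
  end.

Definition nroot (k : nat) (x : R) : R :=
  if Req_EM_T x 0 then 0 else Rpower x (/ INR k).

Definition spec_rad (K : C -> Prop) (L : (C -> C) -> (C -> C)) : R :=
  real (Lim_seq (fun k => nroot (S k) (opnorm K (opiter (S k) L)))).

Definition CSeries (a : nat -> C) : C :=
  (Series (fun n => fst (a n)), Series (fun n => snd (a n))).

Definition theta (b z : C) : C := Cinv (Cplus z b).

Definition wgt (s : R) (z b : C) : R := Rpower (Cmod (Cplus z b)) (- (2 * s)).

(* L_s f (z) = sum_{b in B} |z+b|^{-2s} f(theta_b z), B = range beta *)
Definition Ls (beta : nat -> C) (s : R) (f : C -> C) (z : C) : C :=
  CSeries (fun n => Cmult (RtoC (wgt s z (beta n))) (f (theta (beta n) z))).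

Definition LsRa (beta : nat -> C) (s Rad alpha : R) (f : C -> C) (z : C) : C :=
  Cplus
    (CSeries (fun n => if Rle_dec (Cmod (beta n)) Rad
                       then Cmult (RtoC (wgt s z (beta n))) (f (theta (beta n) z))
                       else RtoC 0))
    (Cmult (RtoC alpha) (f (RtoC 0))).

Definition tail_sum (beta : nat -> C) (s Rad : R) (v : C -> R) (z : C) : R :=
  Series (fun n => if Rlt_dec Rad (Cmod (beta n))
                   then wgt s z (beta n) * v (theta (beta n) z) else 0).

(* Main.v *)
Require Import Defs.
From Stdlib Require Import Reals Lra Lia.
From Coquelicot Require Import Coquelicot.
From Stdlib Require Import Classical IndefiniteDescription List FunctionalExtensionality.
Local Open Scope R_scope.

Lemma filter_K (K : C -> Prop) (l : list C) :
  exists l', (forall t, In t l' -> K t) /\ (forall t, In t l -> K t -> In t l').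
Proof.
induction l as [|a l [l' [H1 H2]]].
- exists nil; simpl; tauto.
- destruct (classic (K a)) as [Ka|Ka].
  + exists (a :: l'); split.
    * intros t [->|Ht]; auto.
    * intros t [->|Ht] Kt; simpl; auto.
  + exists l'; split; auto.
    intros t [->|Ht] Kt; [contradiction|auto].
Qed.

Lemma compact_cover (K : C -> Prop) (B : R)
  (HK : forall z, K z -> Rabs (fst z) <= B /\ Rabs (snd z) <= B)
  (Kcl : forall t, ~ K t -> exists e, 0 < e /\ forall x, K x ->
          ~ (Rabs (fst x - fst t) < e /\ Rabs (snd x - snd t) < e))
  (P : C -> C -> Prop)
  (HP : forall t, K t -> exists e, 0 < e /\ forall x, K x ->
          Rabs (fst x - fst t) < e -> Rabs (snd x - snd t) < e -> P t x) :
  exists l : list C, (forall t, In t l -> K t) /\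
     forall x, K x -> exists t, In t l /\ P t x.
Proof.
set (toC := fun t : Compactness.Tn 2 R => (fst t, fst (snd t)) : C).
assert (Hd : forall t : Compactness.Tn 2 R, exists d : posreal,
   (K (toC t) -> forall x, K x -> Rabs (fst x - fst (toC t)) < d ->
        Rabs (snd x - snd (toC t)) < d -> P (toC t) x) /\
   (~ K (toC t) -> forall x, K x ->
          ~ (Rabs (fst x - fst (toC t)) < d /\ Rabs (snd x - snd (toC t)) < d))).
{ intros t. destruct (classic (K (toC t))) as [Kt|Kt].
  - destruct (HP _ Kt) as [e [He He']]. exists (mkposreal e He); split.
    + intros _ x Kx; apply He'; auto.
    + intros; contradiction.
  - destruct (Kcl _ Kt) as [e [He He']]. exists (mkposreal e He); split.
    + intros; contradiction.
    + intros _ x Kx; apply He'; auto. }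
set (delta := fun t => proj1_sig (constructive_indefinite_description _ (Hd t))).
assert (Hdelta : forall t, _) by (intro t; exact (proj2_sig (constructive_indefinite_description _ (Hd t)))).
fold delta in Hdelta.
pose proof (compactness_list 2 (-B, (-B, tt)) (B, (B, tt)) delta) as Hl.
apply NNPP in Hl. destruct Hl as [l Hl].
destruct (filter_K K (map toC l)) as [l' [Hl1 Hl2]].
exists l'; split; auto.
intros x Kx.
destruct (HK x Kx) as [Bx1 Bx2].
destruct (Hl (fst x, (snd x, tt))) as [t [Ht1 [_ Ht3]]].
{ simpl. split; [apply Rabs_le_between; auto|split; [apply Rabs_le_between; auto|auto]]. }
destruct t as [t1 [t2 []]].
simpl in Ht3. destruct Ht3 as [c1 [c2 _]].
destruct (Hdelta (t1, (t2, tt))) as [Hp Hn].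
destruct (classic (K (toC (t1, (t2, tt))))) as [Kt|Kt].
- exists (toC (t1, (t2, tt))); split.
  + apply Hl2; auto. apply in_map; auto.
  + apply Hp; auto.
- exfalso. apply (Hn Kt x Kx). simpl; auto.
Qed.

Lemma cont_extract (K : C -> Prop) (g : C -> R) (t : C) :
  continuous_on K g -> K t -> forall eps, 0 < eps -> exists e, 0 < e /\
   forall x, K x -> Rabs (fst x - fst t) < e -> Rabs (snd x - snd t) < e ->
     Rabs (g x - g t) < eps.
Proof.
intros Hc Kt eps Heps.
specialize (Hc t Kt (fun y => Rabs (y - g t) < eps)).
destruct Hc as [d Hd].
{ exists (mkposreal eps Heps). intros y Hy. exact Hy. }
exists d; split; [apply cond_pos|].
intros x Kx h1 h2. apply (Hd x); auto. split; assumption.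
Qed.

Lemma Cmod_le_sum (z : C) : Cmod z <= Rabs (fst z) + Rabs (snd z).
Proof.
unfold Cmod. rewrite <- (sqrt_pow2 (Rabs (fst z) + Rabs (snd z))).
2:{ pose proof (Rabs_pos (fst z)); pose proof (Rabs_pos (snd z)); lra. }
apply sqrt_le_1_alt.
pose proof (Rsqr_abs (fst z)); pose proof (Rsqr_abs (snd z)). unfold Rsqr in *.
simpl. pose proof (Rabs_pos (fst z)); pose proof (Rabs_pos (snd z)). nra.
Qed.

Lemma fst_le_Cmod (z : C) : Rabs (fst z) <= Cmod z.
Proof. pose proof (Rmax_Cmod z). pose proof (Rmax_l (Rabs (fst z)) (Rabs (snd z))). lra. Qed.
Lemma snd_le_Cmod (z : C) : Rabs (snd z) <= Cmod z.
Proof. pose proof (Rmax_Cmod z). pose proof (Rmax_r (Rabs (fst z)) (Rabs (snd z))). lra. Qed.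

Lemma Cminus_tri (w x t : C) : Cmod (Cminus w t) <= Cmod (Cminus w x) + Cmod (Cminus x t).
Proof.
replace (Cminus w t) with (Cplus (Cminus w x) (Cminus x t)).
- apply Cmod_triangle.
- apply injective_projections; simpl; ring.
Qed.

Lemma clos_box (H : C -> Prop) (t : C) : ~ clos H t -> exists e, 0 < e /\ forall x, clos H x ->
          ~ (Rabs (fst x - fst t) < e /\ Rabs (snd x - snd t) < e).
Proof.
intros Hn. unfold clos in Hn.
apply not_all_ex_not in Hn. destruct Hn as [eps Hn].
apply imply_to_and in Hn. destruct Hn as [He Hn].
exists (eps / 4); split; [lra|].
intros x Hx [h1 h2].
destruct (Hx (eps/4)) as [w [Hw Hwx]]; [lra|].
apply Hn. exists w; split; auto.
pose proof (Cminus_tri w x t).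
pose proof (Cmod_le_sum (Cminus x t)).
replace (fst (Cminus x t)) with (fst x - fst t) in H1 by (simpl; ring).
replace (snd (Cminus x t)) with (snd x - snd t) in H1 by (simpl; ring).
lra.
Qed.

Lemma clos_bnd (H : C -> Prop) : bounded_set H -> exists B, forall z, clos H z ->
   Rabs (fst z) <= B /\ Rabs (snd z) <= B /\ Cmod z <= B.
Proof.
intros [M HM]. exists (M + 1). intros z Hz.
destruct (Hz 1) as [w [Hw Hwz]]; [lra|].
assert (Cmod z <= M + 1).
{ pose proof (HM w Hw).
  replace z with (Cplus w (Cminus z w)) by (apply injective_projections; simpl; ring).
  pose proof (Cmod_triangle w (Cminus z w)).
  assert (Cmod (Cminus z w) = Cmod (Cminus w z)) by (unfold Cmod; f_equal; simpl; ring).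
  lra. }
pose proof (fst_le_Cmod z); pose proof (snd_le_Cmod z). lra.
Qed.

Lemma list_max (g : C -> R) (l : list C) : exists B, forall t, In t l -> Rabs (g t) <= B.
Proof.
induction l as [|a l [B HB]].
- exists 0; simpl; tauto.
- exists (Rmax (Rabs (g a)) B). intros t [->|Ht].
  + apply Rmax_l.
  + eapply Rle_trans; [apply HB; auto|apply Rmax_r].
Qed.

Lemma list_min (K : C -> Prop) (g : C -> R) (l : list C) :
  (forall t, In t l -> K t) -> (forall t, K t -> 0 < g t) ->
  exists m, 0 < m /\ forall t, In t l -> m <= g t.
Proof.
intros Hl Hg. induction l as [|a l IH].
- exists 1; simpl; split; [lra|tauto].
- destruct IH as [m [Hm Hm']]. { intros; apply Hl; simpl; auto. }
  exists (Rmin (g a) m). split.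
  + apply Rmin_pos; auto. apply Hg, Hl; simpl; auto.
  + intros t [->|Ht].
    * apply Rmin_l.
    * eapply Rle_trans; [apply Rmin_r|auto].
Qed.

Lemma cont_bounded (H : C -> Prop) (g : C -> R) :
  bounded_set H -> continuous_on (clos H) g ->
  exists B, forall x, clos H x -> Rabs (g x) <= B.
Proof.
intros Hb Hc. destruct (clos_bnd H Hb) as [B HB].
assert (HB2 : forall z, clos H z -> Rabs (fst z) <= B /\ Rabs (snd z) <= B)
  by (intros z Hz; destruct (HB z Hz) as [a [b _]]; auto).
destruct (compact_cover (clos H) B HB2 (clos_box H) (fun t x => Rabs (g x - g t) < 1)) as [l [Hl1 Hl2]].
{ intros t Kt. apply (cont_extract (clos H) g t Hc Kt 1). lra. }
destruct (list_max g l) as [B' HB'].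
exists (B' + 1). intros x Kx. destruct (Hl2 x Kx) as [t [Ht Hxt]].
pose proof (HB' t Ht). pose proof (Rabs_triang_inv (g x) (g t)). lra.
Qed.

Lemma cont_posmin (H : C -> Prop) (g : C -> R) :
  bounded_set H -> continuous_on (clos H) g -> (forall x, clos H x -> 0 < g x) ->
  exists m, 0 < m /\ forall x, clos H x -> m <= g x.
Proof.
intros Hb Hc Hp. destruct (clos_bnd H Hb) as [B HB].
assert (HB2 : forall z, clos H z -> Rabs (fst z) <= B /\ Rabs (snd z) <= B)
  by (intros z Hz; destruct (HB z Hz) as [a [b _]]; auto).
destruct (compact_cover (clos H) B HB2 (clos_box H)
   (fun t x => Rabs (g x - g t) < g t / 2)) as [l [Hl1 Hl2]].
{ intros t Kt. apply (cont_extract (clos H) g t Hc Kt). pose proof (Hp t Kt); lra. }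
destruct (list_min (clos H) g l Hl1 Hp) as [m [Hm Hm']].
exists (m / 2). split; [lra|]. intros x Kx. destruct (Hl2 x Kx) as [t [Ht Hxt]].
pose proof (Hm' t Ht). apply Rabs_def2 in Hxt. lra.
Qed.

Lemma clos_re (H : C -> Prop) (Hre : forall z, H z -> 0 < fst z) z :
  clos H z -> 0 <= fst z.
Proof.
intros Hz. destruct (Rle_or_lt 0 (fst z)) as [h|h]; auto.
destruct (Hz (- fst z)) as [w [Hw Hwz]]; [lra|].
pose proof (Hre w Hw). pose proof (fst_le_Cmod (Cminus w z)).
pose proof (Rle_abs (fst (Cminus w z))). simpl in H1, H2. lra.
Qed.

Lemma disk_clos (H : C -> Prop) (c : R) (Hc : 0 < c)
  (HG : forall z : C, Cmod (Cminus z (RtoC c)) < c -> H z) (w : C) :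
  Cmod (Cminus w (RtoC c)) <= c -> clos H w.
Proof.
intros Hw eps Heps.
set (t := Rmin (1/2) (eps / (2 * c))).
assert (Ht1 : 0 < t) by (apply Rmin_pos; [lra| apply Rdiv_lt_0_compat; lra]).
assert (Ht2 : t <= 1/2) by apply Rmin_l.
assert (Ht3 : t * c <= eps / 2).
{ assert (t <= eps / (2 * c)) by apply Rmin_r.
  apply Rmult_le_compat_r with (r := c) in H0; [|lra].
  replace (eps / (2 * c) * c) with (eps / 2) in H0 by (field; lra). lra. }
exists (Cplus w (Cmult (RtoC t) (Cminus (RtoC c) w))). split.
- apply HG.
  replace (Cminus (Cplus w (Cmult (RtoC t) (Cminus (RtoC c) w))) (RtoC c))
    with (Cmult (RtoC (1 - t)) (Cminus w (RtoC c)))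
    by (apply injective_projections; simpl; ring).
  rewrite Cmod_mult, Cmod_R, Rabs_right by lra.
  pose proof (Cmod_ge_0 (Cminus w (RtoC c))). nra.
- replace (Cminus (Cplus w (Cmult (RtoC t) (Cminus (RtoC c) w))) w)
    with (Cmult (RtoC (- t)) (Cminus w (RtoC c)))
    by (apply injective_projections; simpl; ring).
  rewrite Cmod_mult, Cmod_R, Rabs_left by lra.
  pose proof (Cmod_ge_0 (Cminus w (RtoC c))). nra.
Qed.

Lemma theta_disk (gamma : R) (Hg : 0 < gamma) (u : C) :
  gamma <= fst u -> Cmod (Cminus (Cinv u) (RtoC (/ (2 * gamma)))) <= / (2 * gamma).
Proof.
intros Hu.
set (c := / (2 * gamma)).
assert (Hc : c * (2 * gamma) = 1) by (unfold c; field; lra).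
assert (Hcp : 0 < c) by (unfold c; apply Rinv_0_lt_compat; lra).
set (p := fst u) in *. set (q := snd u).
assert (HD : 0 < p ^ 2 + q ^ 2) by nra.
set (a := / (p ^ 2 + q ^ 2)).
assert (Ha : a * (p ^ 2 + q ^ 2) = 1) by (unfold a; field; lra).
assert (Hap : 0 < a) by (unfold a; apply Rinv_0_lt_compat; lra).
assert (2 * c * p >= 1) by nra.
assert (Hsq : (p * a - c) ^ 2 + (- q * a) ^ 2 <= c ^ 2).
{ replace ((p * a - c) ^ 2 + (- q * a) ^ 2) with (a * (a * (p^2 + q^2)) - 2 * c * p * a + c ^ 2) by ring.
  rewrite Ha. nra. }
apply Rle_trans with (sqrt (c ^ 2)); [|rewrite sqrt_pow2; lra].
unfold Cmod. apply sqrt_le_1_alt.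
replace (fst (Cminus (Cinv u) (RtoC c))) with (p * a - c) by (unfold Cminus, Cinv, Cplus, Copp, RtoC; cbn [fst snd]; unfold Rdiv; fold p q a; ring).
replace (snd (Cminus (Cinv u) (RtoC c))) with (- q * a) by (unfold Cminus, Cinv, Cplus, Copp, RtoC; cbn [fst snd]; unfold Rdiv; fold p q a; ring).
exact Hsq.
Qed.

Lemma wgt_bound (s : R) (z b : C) (Mb : R) : 0 < s -> Cmod z <= Mb -> 0 <= fst z -> 1 <= fst b ->
  0 <= wgt s z b <= Rpower (1 + Mb) (2 * s) * Rpower (Cmod b) (- (2 * s)).
Proof.
intros Hs HM Hz Hb. unfold wgt.
split; [left; apply exp_pos|].
assert (H1 : 1 <= Cmod (Cplus z b)).
{ pose proof (fst_le_Cmod (Cplus z b)). pose proof (Rle_abs (fst (Cplus z b))). simpl in *. lra. }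
assert (H2 : Cmod b <= (1 + Mb) * Cmod (Cplus z b)).
{ replace b with (Cminus (Cplus z b) z) at 1 by (apply injective_projections; simpl; ring).
  unfold Cminus. pose proof (Cmod_triangle (Cplus z b) (Copp z)). rewrite Cmod_opp in H.
  pose proof (Cmod_ge_0 z). nra. }
assert (H3 : 0 < Cmod b).
{ pose proof (fst_le_Cmod b). pose proof (Rle_abs (fst b)). lra. }
assert (HMb : 0 <= Mb) by (pose proof (Cmod_ge_0 z); lra).
rewrite !Rpower_Ropp.
assert (Rpower (Cmod b) (2 * s) <= Rpower (1 + Mb) (2 * s) * Rpower (Cmod (Cplus z b)) (2 * s)).
{ rewrite Rpower_mult_distr by lra. apply Rle_Rpower_l; [lra|split; auto]. }
assert (0 < Rpower (Cmod b) (2 * s)) by apply exp_pos.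
assert (0 < Rpower (Cmod (Cplus z b)) (2 * s)) by apply exp_pos.
assert (0 < Rpower (1 + Mb) (2 * s)) by apply exp_pos.
apply Rmult_le_reg_r with (Rpower (Cmod (Cplus z b)) (2 * s)); auto.
rewrite Rinv_l by lra.
apply Rmult_le_reg_r with (Rpower (Cmod b) (2 * s)); auto.
replace (Rpower (1 + Mb) (2 * s) * / Rpower (Cmod b) (2 * s) * Rpower (Cmod (Cplus z b)) (2 * s) *
   Rpower (Cmod b) (2 * s)) with (Rpower (1 + Mb) (2 * s) * Rpower (Cmod (Cplus z b)) (2 * s)) by (field; lra).
lra.
Qed.

Section Geo.
Variables (gamma : R) (H : C -> Prop).
Hypothesis Hgamma : 1 <= gamma.
Hypothesis HG : forall z : C, Cmod (Cminus z (RtoC (/ (2 * gamma)))) < / (2 * gamma) -> H z.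
Hypothesis Hre : forall z, H z -> 0 < fst z.

Lemma theta_clos (b z : C) : clos H z -> gamma <= fst b -> clos H (theta b z).
Proof.
intros Hz Hb. unfold theta. apply (disk_clos H (/ (2 * gamma))).
- apply Rinv_0_lt_compat; lra.
- exact HG.
- apply theta_disk; [lra|]. pose proof (clos_re H Hre z Hz). simpl. lra.
Qed.

Lemma zero_clos : clos H (RtoC 0).
Proof.
apply (disk_clos H (/ (2 * gamma))).
- apply Rinv_0_lt_compat; lra.
- exact HG.
- assert (0 < / (2 * gamma)) by (apply Rinv_0_lt_compat; lra).
  unfold Cmod; simpl. replace ((0 + - / (2 * gamma)) * ((0 + - / (2 * gamma)) * 1) + (0 + - 0) * ((0 + - 0) * 1))
   with ((/ (2 * gamma))²) by (unfold Rsqr; ring). rewrite sqrt_Rsqr; lra.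
Qed.
End Geo.

Lemma Series_zero : Series (fun _ => 0) = 0.
Proof.
rewrite (Series_ext _ (fun n => 0 * (fun _ => 0) n)) by (intros; ring).
rewrite Series_scal_l. ring.
Qed.

Lemma Series_nonneg (b : nat -> R) : (forall n, 0 <= b n) -> ex_series b -> 0 <= Series b.
Proof.
intros Hb He. rewrite <- Series_zero. apply Series_le; auto. intros n; split; [lra|auto].
Qed.

Lemma ex_series_R_le (a b : nat -> R) : (forall n, Rabs (a n) <= b n) -> ex_series b -> ex_series a.
Proof. intros H He. apply (ex_series_le a b); auto. Qed.

Lemma cs_le (u1 u2 : R) (x : C) : u1 ^ 2 + u2 ^ 2 = 1 -> u1 * fst x + u2 * snd x <= Cmod x.
Proof.
intros Hu. eapply Rle_trans; [apply Rle_abs|].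
rewrite <- sqrt_Rsqr_abs. unfold Cmod. apply sqrt_le_1_alt. unfold Rsqr.
replace (fst x ^ 2 + snd x ^ 2) with ((u1^2+u2^2) * (fst x ^ 2 + snd x ^ 2)) by (rewrite Hu; ring).
pose proof (pow2_ge_0 (u1 * snd x - u2 * fst x)). nra.
Qed.

Lemma cseries_bound (t : nat -> C) (b : nat -> R) :
  (forall n, Cmod (t n) <= b n) -> ex_series b -> Cmod (CSeries t) <= Series b.
Proof.
intros Hb He.
assert (E1 : ex_series (fun n => fst (t n))).
{ apply (ex_series_R_le _ b); auto. intros n. eapply Rle_trans; [apply fst_le_Cmod|auto]. }
assert (E2 : ex_series (fun n => snd (t n))).
{ apply (ex_series_R_le _ b); auto. intros n. eapply Rle_trans; [apply snd_le_Cmod|auto]. }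
assert (Hb0 : forall n, 0 <= b n) by (intros n; eapply Rle_trans; [apply Cmod_ge_0|apply Hb]).
set (S1 := Series (fun n => fst (t n))). set (S2 := Series (fun n => snd (t n))).
assert (HS : CSeries t = (S1, S2)) by reflexivity.
rewrite HS.
set (r := Cmod (S1, S2)).
destruct (Req_dec r 0) as [Hr|Hr].
{ rewrite Hr. apply Series_nonneg; auto. }
assert (Hr0 : 0 < r) by (pose proof (Cmod_ge_0 (S1, S2)); fold r in H; lra).
assert (Hr2 : r * r = S1 ^ 2 + S2 ^ 2).
{ unfold r, Cmod. simpl fst; simpl snd. rewrite sqrt_sqrt; [ring|nra]. }
set (u1 := S1 / r). set (u2 := S2 / r).
assert (Hu : u1 ^ 2 + u2 ^ 2 = 1).
{ unfold u1, u2. field_simplify; [|lra]. rewrite <- Hr2. field. lra. }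
assert (Hrr : r = u1 * S1 + u2 * S2).
{ unfold u1, u2. replace (S1 / r * S1 + S2 / r * S2) with ((S1^2+S2^2)/r) by (field; lra).
  rewrite <- Hr2. field. lra. }
rewrite Hrr. unfold S1, S2.
rewrite <- !Series_scal_l.
assert (Ea1 : ex_series (fun n => u1 * fst (t n))) by apply (ex_series_scal_l u1 _ E1).
assert (Ea2 : ex_series (fun n => u2 * snd (t n))) by apply (ex_series_scal_l u2 _ E2).
rewrite <- Series_plus; auto.
assert (Ea : ex_series (fun n => u1 * fst (t n) + u2 * snd (t n))).
{ apply (ex_series_plus (fun n => u1 * fst (t n)) (fun n => u2 * snd (t n))); auto. }
assert (Hd : 0 <= Series (fun n => b n - (u1 * fst (t n) + u2 * snd (t n)))).
{ apply Series_nonneg.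
  - intros n. pose proof (cs_le u1 u2 (t n) Hu). pose proof (Hb n). lra.
  - apply (ex_series_minus b (fun n => u1 * fst (t n) + u2 * snd (t n))); auto. }
rewrite Series_minus in Hd; auto. lra.
Qed.

Section Gen.
Variables (K : C -> Prop) (beta : nat -> C) (s : R) (v : C -> R) (W : nat -> R) (M : R).
Hypothesis Kinv : forall z n, K z -> K (theta (beta n) z).
Hypothesis K0 : K (RtoC 0).
Hypothesis Hw : forall z n, K z -> 0 <= wgt s z (beta n) <= W n.
Hypothesis HW : ex_series W.
Hypothesis vpos : forall z, K z -> 0 < v z.
Hypothesis vM : forall z, K z -> v z <= M.

Definition Gen (sel : nat -> bool) (al : R) (f : C -> C) (z : C) : C :=
  Cplus (CSeries (fun n => if sel n then Cmult (RtoC (wgt s z (beta n))) (f (theta (beta n) z)) else RtoC 0))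
        (Cmult (RtoC al) (f (RtoC 0))).

Definition Tv (sel : nat -> bool) (al : R) (z : C) : R :=
  Series (fun n => if sel n then wgt s z (beta n) * v (theta (beta n) z) else 0) + al * v (RtoC 0).

Lemma exW (c : R) : ex_series (fun n => c * W n).
Proof. apply (ex_series_scal_l c W HW). Qed.

Lemma ex_sel (sel : nat -> bool) (z : C) : K z ->
  ex_series (fun n => if sel n then wgt s z (beta n) * v (theta (beta n) z) else 0).
Proof.
intros Kz. apply (ex_series_R_le _ (fun n => M * W n)); [|apply exW].
intros n. destruct (sel n).
- pose proof (Hw z n Kz). pose proof (vpos _ (Kinv z n Kz)). pose proof (vM _ (Kinv z n Kz)).
  rewrite Rabs_right by nra. nra.
- rewrite Rabs_R0. pose proof (Hw z n Kz). pose proof (vpos _ K0). pose proof (vM _ K0). nra.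
Qed.

Lemma Tv_nonneg sel al z : 0 <= al -> K z -> 0 <= Tv sel al z.
Proof.
intros Hal Kz. unfold Tv. pose proof (vpos _ K0).
assert (0 <= Series (fun n => if sel n then wgt s z (beta n) * v (theta (beta n) z) else 0)).
{ apply Series_nonneg; [|apply ex_sel; auto].
  intros n; destruct (sel n); [|lra]. pose proof (Hw z n Kz). pose proof (vpos _ (Kinv z n Kz)). nra. }
nra.
Qed.

Lemma GenBound (sel : nat -> bool) (al c : R) (F : C -> C) :
  0 <= al -> 0 <= c -> (forall w, K w -> Cmod (F w) <= c * v w) ->
  forall z, K z -> Cmod (Gen sel al F z) <= c * Tv sel al z.
Proof.
intros Hal Hc HF z Kz. unfold Gen, Tv.
eapply Rle_trans; [apply Cmod_triangle|].
rewrite Cmod_mult, Cmod_R, Rabs_right by lra.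
pose proof (HF _ K0).
assert (Cmod (CSeries (fun n => if sel n then Cmult (RtoC (wgt s z (beta n))) (F (theta (beta n) z)) else RtoC 0))
   <= Series (fun n => c * (if sel n then wgt s z (beta n) * v (theta (beta n) z) else 0))).
{ apply cseries_bound.
  - intros n. destruct (sel n).
    + rewrite Cmod_mult, Cmod_R. pose proof (Hw z n Kz). rewrite Rabs_right by lra.
      pose proof (HF _ (Kinv z n Kz)). pose proof (Cmod_ge_0 (F (theta (beta n) z))). nra.
    + rewrite Cmod_R, Rabs_R0. lra.
  - apply (ex_series_scal_l c _ (ex_sel sel z Kz)). }
rewrite Series_scal_l in H0. nra.
Qed.

Lemma GenLow (sel : nat -> bool) (al c d : R) (F : C -> C) :
  0 <= al -> 0 <= c ->
  (forall w, K w -> snd (F w) = 0 /\ c * v w <= fst (F w) <= d * v w) ->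
  forall z, K z -> snd (Gen sel al F z) = 0 /\ c * Tv sel al z <= fst (Gen sel al F z).
Proof.
intros Hal Hc HF z Kz.
set (t := fun n => if sel n then Cmult (RtoC (wgt s z (beta n))) (F (theta (beta n) z)) else RtoC 0).
assert (Ht1 : forall n, fst (t n) = if sel n then wgt s z (beta n) * fst (F (theta (beta n) z)) else 0).
{ intros n; unfold t; destruct (sel n); simpl; [ring|reflexivity]. }
assert (Ht2 : forall n, snd (t n) = 0).
{ intros n; unfold t; destruct (sel n); simpl; [|reflexivity].
  destruct (HF _ (Kinv z n Kz)) as [h _]. rewrite h. ring. }
assert (Hd : 0 <= d).
{ destruct (HF _ K0) as [_ h]. pose proof (vpos _ K0). nra. }
split.
- unfold Gen. fold t. unfold CSeries. simpl.
  rewrite (Series_ext _ (fun _ => 0) Ht2), Series_zero.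
  destruct (HF _ K0) as [h _]. rewrite h. ring.
- unfold Gen. fold t. unfold CSeries. simpl.
  rewrite (Series_ext _ _ Ht1).
  destruct (HF _ K0) as [h0 [h1 h2]]. rewrite h0.
  unfold Tv.
  assert (Ex1 : ex_series (fun n => if sel n then wgt s z (beta n) * fst (F (theta (beta n) z)) else 0)).
  { apply (ex_series_R_le _ (fun n => (d * M) * W n)); [|apply exW].
    intros n. destruct (sel n).
    + pose proof (Hw z n Kz). destruct (HF _ (Kinv z n Kz)) as [_ [g1 g2]].
      pose proof (vpos _ (Kinv z n Kz)). pose proof (vM _ (Kinv z n Kz)).
      assert (0 <= fst (F (theta (beta n) z))) by nra.
      rewrite Rabs_right by (apply Rle_ge, Rmult_le_pos; lra).
      assert (d * v (theta (beta n) z) <= d * M) by nra. nra.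
    + rewrite Rabs_R0. pose proof (Hw z n Kz). pose proof (vpos _ K0). pose proof (vM _ K0).
      apply Rmult_le_pos; [apply Rmult_le_pos|]; lra. }
  assert (Hdiff : 0 <= Series (fun n => (if sel n then wgt s z (beta n) * fst (F (theta (beta n) z)) else 0)
        - c * (if sel n then wgt s z (beta n) * v (theta (beta n) z) else 0))).
  { apply Series_nonneg.
    - intros n. destruct (sel n); [|lra].
      pose proof (Hw z n Kz). destruct (HF _ (Kinv z n Kz)) as [_ [g1 g2]]. nra.
    - apply (ex_series_minus (fun n => if sel n then wgt s z (beta n) * fst (F (theta (beta n) z)) else 0)
         (fun n => c * (if sel n then wgt s z (beta n) * v (theta (beta n) z) else 0))); auto.
      apply (ex_series_scal_l c _ (ex_sel sel z Kz)). }
  rewrite Series_minus, Series_scal_l in Hdiff; auto.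
  2:{ apply (ex_series_scal_l c _ (ex_sel sel z Kz)). }
  nra.
Qed.

End Gen.

Lemma nroot_nonneg k x : 0 <= nroot k x.
Proof. unfold nroot. destruct (Rstruct.Req_EM_T x 0); simpl; [lra|left; apply exp_pos]. Qed.

Lemma Rpower_root (mu : R) (k : nat) : 0 < mu -> Rpower (mu ^ S k) (/ INR (S k)) = mu.
Proof.
intros Hmu. rewrite <- Rpower_pow by auto. rewrite Rpower_mult.
rewrite Rinv_r. apply Rpower_1; auto. apply not_0_INR; lia.
Qed.

Lemma nroot_up (c mu x : R) (k : nat) : 0 < c -> 0 <= mu -> 0 <= x <= c * mu ^ S k ->
  nroot (S k) x <= Rpower c (/ INR (S k)) * mu.
Proof.
intros Hc Hmu Hx. unfold nroot. destruct (Rstruct.Req_EM_T x 0) as [e|e]; cbn [ssrbool.is_left].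
- apply Rmult_le_pos; [left; apply exp_pos|auto].
- assert (0 < x) by lra.
  assert (0 < mu).
  { destruct Hmu as [h|h]; auto. subst mu. simpl in Hx. lra. }
  eapply Rle_trans.
  + apply Rle_Rpower_l; [left; apply Rinv_0_lt_compat, lt_0_INR; lia|split; [auto|apply Hx]].
  + rewrite <- Rpower_mult_distr by (auto; apply pow_lt; auto).
    rewrite Rpower_root by auto. lra.
Qed.

Lemma nroot_low (c lam x : R) (k : nat) : 0 < c -> 0 <= lam -> c * lam ^ S k <= x ->
  Rpower c (/ INR (S k)) * lam <= nroot (S k) x.
Proof.
intros Hc Hl Hx. destruct Hl as [Hl|Hl].
- unfold nroot. destruct (Rstruct.Req_EM_T x 0) as [e|e]; cbn [ssrbool.is_left].
  + exfalso. assert (0 < c * lam ^ S k) by (apply Rmult_lt_0_compat; auto; apply pow_lt; auto). lra.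
  + rewrite <- (Rpower_root lam k Hl) at 1.
    rewrite Rpower_mult_distr by (auto; apply pow_lt; auto).
    apply Rle_Rpower_l; [left; apply Rinv_0_lt_compat, lt_0_INR; lia|split; auto].
    apply Rmult_lt_0_compat; auto; apply pow_lt; auto.
- subst lam. rewrite Rmult_0_r. apply nroot_nonneg.
Qed.

Lemma lim_root (c a : R) : 0 < c -> is_lim_seq (fun k => Rpower c (/ INR (S k)) * a) a.
Proof.
intros Hc.
assert (H1 : is_lim_seq (fun k => / INR (S k)) 0).
{ apply (is_lim_seq_incr_1 (fun k => / INR k) 0).
  replace (Finite 0) with (Rbar_inv p_infty) by reflexivity.
  apply is_lim_seq_inv; [apply is_lim_seq_INR|discriminate]. }
assert (H2 : is_lim_seq (fun k => / INR (S k) * ln c) (0 * ln c)).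
{ apply (is_lim_seq_scal_r _ (ln c) 0 H1). }
assert (H3 : is_lim_seq (fun k => exp (/ INR (S k) * ln c)) (exp (0 * ln c))).
{ apply (is_lim_seq_continuous exp). apply derivable_continuous_pt, derivable_pt_exp. exact H2. }
rewrite Rmult_0_l, exp_0 in H3.
pose proof (is_lim_seq_scal_r _ a 1 H3) as H4. simpl in H4. rewrite Rmult_1_l in H4.
exact H4.
Qed.

Lemma lim_between (u A B : nat -> R) (lb ub : R) :
  (forall k, B k <= u k <= A k) -> is_lim_seq B lb -> is_lim_seq A ub ->
  lb <= real (Lim_seq u) <= ub.
Proof.
intros Hu HB HA.
assert (h1 : Rbar_le (Lim_seq B) (Lim_seq u)).
{ apply Lim_seq_le_loc. exists 0%nat. intros; apply Hu. }
assert (h2 : Rbar_le (Lim_seq u) (Lim_seq A)).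
{ apply Lim_seq_le_loc. exists 0%nat. intros; apply Hu. }
rewrite (is_lim_seq_unique _ _ HB) in h1.
rewrite (is_lim_seq_unique _ _ HA) in h2.
destruct (Lim_seq u) as [l| |]; simpl in *; try contradiction. lra.
Qed.

Lemma lub_fin (E : R -> Prop) (x0 B : R) : E x0 -> (forall x, E x -> x <= B) ->
  (forall x, E x -> x <= real (Lub_Rbar E)) /\ real (Lub_Rbar E) <= B.
Proof.
intros H0 HB. destruct (Lub_Rbar_correct E) as [ub lub].
destruct (Lub_Rbar E) as [l| |] eqn:Hl.
- split.
  + intros x Hx. apply (ub x Hx).
  + apply (lub (Finite B)). intros x Hx. apply HB; auto.
- exfalso. apply (lub (Finite B)). intros x Hx. apply HB; auto.
- exfalso. apply (ub x0 H0).
Qed.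

Lemma supnorm_le (K : C -> Prop) (f : C -> C) (z0 : C) (B : R) :
  K z0 -> (forall z, K z -> Cmod (f z) <= B) ->
  (forall z, K z -> Cmod (f z) <= supnorm K f) /\ supnorm K f <= B.
Proof.
intros Hz0 HB. unfold supnorm.
destruct (lub_fin (fun x => exists z, K z /\ x = Cmod (f z)) (Cmod (f z0)) B) as [h1 h2].
- exists z0; auto.
- intros x [z [Kz ->]]; auto.
- split; auto. intros z Kz. apply h1. exists z; auto.
Qed.

Lemma Cmod_real (z : C) : snd z = 0 -> Cmod z = Rabs (fst z).
Proof. destruct z as [x y]; simpl; intros ->. apply (Cmod_R x). Qed.

Section Iter.
Variables (K : C -> Prop) (beta : nat -> C) (s : R) (v : C -> R) (W : nat -> R) (M : R).
Hypothesis Kinv : forall z n, K z -> K (theta (beta n) z).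
Hypothesis K0 : K (RtoC 0).
Hypothesis Hw : forall z n, K z -> 0 <= wgt s z (beta n) <= W n.
Hypothesis HW : ex_series W.
Hypothesis vpos : forall z, K z -> 0 < v z.
Hypothesis vM : forall z, K z -> v z <= M.
Variables (sel : nat -> bool) (al lam mu : R).
Hypothesis Hal : 0 <= al.
Hypothesis Hlam : 0 <= lam.
Hypothesis Hmu : 0 <= mu.
Hypothesis Hlow : forall z, K z -> lam * v z <= Tv beta s v sel al z.
Hypothesis Hup : forall z, K z -> Tv beta s v sel al z <= mu * v z.

Local Notation T := (Gen beta s sel al).

Lemma IterUp (k : nat) : forall (F : C -> C) (c : R), 0 <= c -> (forall w, K w -> Cmod (F w) <= c * v w) ->
  forall z, K z -> Cmod (opiter k T F z) <= c * mu ^ k * v z.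
Proof.
induction k as [|k IH]; intros F c Hc HF z Kz.
- simpl. rewrite Rmult_1_r. auto.
- simpl opiter. 
  eapply Rle_trans.
  + apply (GenBound K beta s v W M Kinv K0 Hw HW vpos vM sel al (c * mu ^ k) (opiter k T F) Hal).
    * apply Rmult_le_pos; auto. apply pow_le; auto.
    * intros w Kw. apply IH; auto.
    * exact Kz.
  + pose proof (Hup z Kz). pose proof (pow_le mu k Hmu). simpl.
    assert (0 <= c * mu ^ k) by (apply Rmult_le_pos; auto).
    apply Rmult_le_compat_l with (r := c * mu ^ k) in H; auto.
    replace (c * (mu * mu ^ k) * v z) with (c * mu ^ k * (mu * v z)) by ring. lra.
Qed.

Lemma IterLow (k : nat) : forall (F : C -> C) (c d : R), 0 <= c ->
  (forall w, K w -> snd (F w) = 0 /\ c * v w <= fst (F w) <= d * v w) ->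
  forall z, K z -> snd (opiter k T F z) = 0 /\ c * lam ^ k * v z <= fst (opiter k T F z) <= d * mu ^ k * v z.
Proof.
induction k as [|k IH]; intros F c d Hc HF z Kz.
- simpl. rewrite !Rmult_1_r. auto.
- simpl opiter. 
  assert (Hc' : 0 <= c * lam ^ k) by (apply Rmult_le_pos; auto; apply pow_le; auto).
  assert (Hd : 0 <= d).
  { destruct (HF _ K0) as [_ h]. pose proof (vpos _ K0). nra. }
  assert (Hd' : 0 <= d * mu ^ k) by (apply Rmult_le_pos; auto; apply pow_le; auto).
  destruct (GenLow K beta s v W M Kinv K0 Hw HW vpos vM sel al (c * lam ^ k) (d * mu ^ k) (opiter k T F)
     Hal Hc' (fun w Kw => IH F c d Hc HF w Kw) z Kz) as [g1 g2].
  split; [exact g1|split].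
  + pose proof (Hlow z Kz). apply Rmult_le_compat_l with (r := c * lam ^ k) in H; auto. change (lam ^ S k) with (lam * lam ^ k).
    replace (c * (lam * lam ^ k) * v z) with (c * lam ^ k * (lam * v z)) by ring. lra.
  + pose proof (GenBound K beta s v W M Kinv K0 Hw HW vpos vM sel al (d * mu ^ k) (opiter k T F) Hal Hd') as GB.
    assert (HB : forall w, K w -> Cmod (opiter k T F w) <= d * mu ^ k * v w).
    { intros w Kw. destruct (IH F c d Hc HF w Kw) as [e1 [e2 e3]].
      rewrite Cmod_real by auto. pose proof (vpos _ Kw).
      assert (0 <= c * lam ^ k * v w) by (apply Rmult_le_pos; lra).
      rewrite Rabs_right by lra. auto. }
    specialize (GB HB z Kz).
    pose proof (Rle_abs (fst (Gen beta s sel al (opiter k T F) z))).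
    pose proof (fst_le_Cmod (Gen beta s sel al (opiter k T F) z)).
    pose proof (Hup z Kz). apply Rmult_le_compat_l with (r := d * mu ^ k) in H1; auto. change (mu ^ S k) with (mu * mu ^ k).
    replace (d * (mu * mu ^ k) * v z) with (d * mu ^ k * (mu * v z)) by ring. lra.
Qed.


Variable m : R.
Hypothesis Hm : 0 < m.
Hypothesis vm : forall z, K z -> m <= v z.
Hypothesis Kbd : forall f : C -> C, continuous_on K f -> exists B, forall z, K z -> Cmod (f z) <= B.
Hypothesis f0c : continuous_on K (fun w => RtoC (v w / M)).

Lemma Mpos : 0 < M.
Proof. pose proof (vpos _ K0); pose proof (vM _ K0); lra. Qed.

Lemma Tk_bound (k : nat) (f : C -> C) : continuous_on K f -> supnorm K f <= 1 ->
  supnorm K (opiter k T f) <= mu ^ k * M / m /\ 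
  forall z, K z -> Cmod (opiter k T f z) <= mu ^ k * M / m.
Proof.
intros Hc Hs. destruct (Kbd f Hc) as [B HB].
destruct (supnorm_le K f (RtoC 0) B K0 HB) as [h1 _].
assert (Hf : forall w, K w -> Cmod (f w) <= / m * v w).
{ intros w Kw. pose proof (h1 w Kw). pose proof (vm w Kw).
  apply Rle_trans with 1; [lra|]. apply (Rmult_le_reg_l m); [lra|]. field_simplify; lra. }
assert (Hz : forall z, K z -> Cmod (opiter k T f z) <= mu ^ k * M / m).
{ intros z Kz. eapply Rle_trans.
  - apply (IterUp k f (/ m)); auto. left; apply Rinv_0_lt_compat; auto.
  - pose proof (vM z Kz). pose proof (pow_le mu k Hmu). pose proof (vpos z Kz).
    unfold Rdiv. assert (0 < / m) by (apply Rinv_0_lt_compat; auto).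
    replace (/ m * mu ^ k * v z) with (mu ^ k * v z * / m) by ring.
    apply Rmult_le_compat_r; [lra|]. apply Rmult_le_compat_l; lra. }
split; auto.
apply (supnorm_le K _ (RtoC 0) _ K0 Hz).
Qed.

Lemma zero_cont : continuous_on K (fun _ : C => RtoC 0).
Proof. intros x Kx. apply filterlim_const. Qed.

Lemma zero_sup : supnorm K (fun _ : C => RtoC 0) <= 1.
Proof.
destruct (supnorm_le K (fun _ => RtoC 0) (RtoC 0) 0 K0) as [_ h].
- intros; rewrite Cmod_0; lra.
- lra.
Qed.

Lemma opnorm_up (k : nat) : 0 <= opnorm K (opiter k T) <= mu ^ k * M / m.
Proof.
unfold opnorm.
destruct (lub_fin (fun x => exists f : C -> C, continuous_on K f /\ supnorm K f <= 1 /\ x = supnorm K (opiter k T f)) (supnorm K (opiter k T (fun _ => RtoC 0))) (mu ^ k * M / m)) as [h1 h2].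
- exists (fun _ => RtoC 0). split; [apply zero_cont|split; [apply zero_sup|auto]].
- intros x [f [Hc [Hs ->]]]. apply (Tk_bound k f Hc Hs).
- split; auto.
  eapply Rle_trans; [|apply h1].
  + destruct (Tk_bound k _ zero_cont zero_sup) as [_ hz].
    destruct (supnorm_le K _ (RtoC 0) _ K0 hz) as [g _].
    eapply Rle_trans; [apply Cmod_ge_0|apply (g (RtoC 0) K0)].
  + exists (fun _ => RtoC 0). split; [apply zero_cont|split; [apply zero_sup|auto]].
Qed.

Lemma opnorm_low (k : nat) : lam ^ k * v (RtoC 0) / M <= opnorm K (opiter k T).
Proof.
pose proof Mpos as HM.
set (f0 := fun w => RtoC (v w / M)).
assert (Hs : supnorm K f0 <= 1).
{ destruct (supnorm_le K f0 (RtoC 0) 1 K0) as [_ h]; auto.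
  intros z Kz. unfold f0. rewrite Cmod_R. pose proof (vpos z Kz). pose proof (vM z Kz).
  assert (Hq : v z / M <= 1).
  { apply (Rmult_le_reg_l M); auto. replace (M * (v z / M)) with (v z) by (field; lra). lra. }
  assert (Hq' : 0 <= v z / M).
  { apply Rmult_le_pos; [lra|left; apply Rinv_0_lt_compat; auto]. }
  rewrite Rabs_right; lra. }
unfold opnorm.
destruct (lub_fin (fun x => exists f : C -> C, continuous_on K f /\ supnorm K f <= 1 /\ x = supnorm K (opiter k T f)) (supnorm K (opiter k T f0)) (mu ^ k * M / m)) as [h1 h2].
- exists f0. auto.
- intros x [f [Hc [Hs' ->]]]. apply (Tk_bound k f Hc Hs').
- eapply Rle_trans; [|apply h1; exists f0; auto].
  destruct (Tk_bound k f0 f0c Hs) as [_ hz].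
  destruct (supnorm_le K _ (RtoC 0) _ K0 hz) as [g _].
  eapply Rle_trans; [|apply (g (RtoC 0) K0)].
  destruct (IterLow k f0 (/ M) (/ M)) with (z := RtoC 0) as [_ [e1 _]]; auto.
  + left; apply Rinv_0_lt_compat; auto.
  + intros w Kw. unfold f0; simpl. split; [reflexivity|]. unfold Rdiv. rewrite Rmult_comm. lra.
  + eapply Rle_trans; [|eapply Rle_trans; [apply Rle_abs|apply fst_le_Cmod]].
    replace (lam ^ k * v (RtoC 0) / M) with (/ M * lam ^ k * v (RtoC 0)) by (field; lra). exact e1.
Qed.


Lemma spec_bounds : lam <= spec_rad K (Gen beta s sel al) <= mu.
Proof.
pose proof Mpos as HM. pose proof (vpos _ K0) as Hv0.
unfold spec_rad.
apply (lim_between _ (fun k => Rpower (M / m) (/ INR (S k)) * mu)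
                     (fun k => Rpower (v (RtoC 0) / M) (/ INR (S k)) * lam)).
- intros k. split.
  + apply nroot_low; auto.
    * apply Rdiv_lt_0_compat; auto.
    * pose proof (opnorm_low (S k)). replace (v (RtoC 0) / M * lam ^ S k) with (lam ^ S k * v (RtoC 0) / M) by (field; lra). auto.
  + apply nroot_up; auto.
    * apply Rdiv_lt_0_compat; auto.
    * pose proof (opnorm_up (S k)). replace (M / m * mu ^ S k) with (mu ^ S k * M / m) by (field; lra). auto.
- apply lim_root. apply Rdiv_lt_0_compat; auto.
- apply lim_root. apply Rdiv_lt_0_compat; auto.
Qed.

End Iter.

Lemma RtoC_lim {T : Type} (F : (T -> Prop) -> Prop) {FF : Filter F} (g : T -> R) (r c : R) :
  0 < c -> filterlim g F (locally r) -> filterlim (fun x => RtoC (g x / c)) F (locally (RtoC (r / c))).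
Proof.
intros Hc Hg P [eps HP]. unfold filtermap.
assert (Hec : 0 < eps * c) by (apply Rmult_lt_0_compat; [apply cond_pos|auto]).
apply (filter_imp (fun x => ball r (eps * c) (g x))).
- intros x Hx. apply HP. split.
  + change (Rabs (g x / c - r / c) < eps).
    change (Rabs (g x - r) < eps * c) in Hx.
    replace (g x / c - r / c) with ((g x - r) / c) by (field; lra).
    unfold Rdiv. rewrite Rabs_mult, Rabs_inv, (Rabs_right c) by lra.
    apply (Rmult_lt_reg_r c); auto. rewrite Rmult_assoc, Rinv_l by lra. lra.
  + apply ball_center.
- apply Hg. exists (mkposreal _ Hec). auto.
Qed.

Lemma cmod_cont (K : C -> Prop) (f : C -> C) : continuous_on K f -> continuous_on K (fun z => Cmod (f z)).
Proof.
intros Hc x Kx.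
pose proof (filterlim_norm (K:=C_AbsRing) (V:=C_NormedModule) (f x)) as Hn.
apply (filterlim_comp _ _ _ f (@norm _ C_NormedModule) (within K (locally x)) (locally (f x))).
- apply Hc; auto.
- exact Hn.
Qed.

Lemma Cplus_0_mult (x y : C) : Cplus x (Cmult (RtoC 0) y) = x.
Proof. destruct x, y. apply injective_projections; simpl; ring. Qed.

Theorem theorem5p11
  (gamma : R) (beta : nat -> C) (s : R) (H : C -> Prop) (v : C -> R)
  (Rad delta eta : R)
  (Hgamma : 1 <= gamma)
  (Hinj : forall m n, beta m = beta n -> m = n)
  (HB : forall n, gamma <= fst (beta n))
  (Hs : 0 < s)
  (Hsum : ex_series (fun n => Rpower (Cmod (beta n)) (- (2 * s))))
  (Hopen : open H) (Hbdd : bounded_set H) (Hmr : mildly_regular H)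
  (HG : forall z : C, Cmod (Cminus z (RtoC (/ (2 * gamma)))) < / (2 * gamma) -> H z)
  (Hre : forall z, H z -> 0 < fst z)
  (Hvc : continuous_on (clos H) v)
  (Hvpos : forall z, clos H z -> 0 < v z)
  (Hveig : exists lam : C, forall z, clos H z ->
       Ls beta s (fun w => RtoC (v w)) z = Cmult lam (RtoC (v z)))
  (HR : 2 < Rad) (Hdelta : 0 < delta) (Heta : 0 <= eta)
  (Htail : forall z, clos H z ->
       eta * v (RtoC 0) <= tail_sum beta s Rad v z <= delta * v (RtoC 0)) :
  spec_rad (clos H) (LsRa beta s Rad eta) <= spec_rad (clos H) (Ls beta s)
  /\ spec_rad (clos H) (Ls beta s) <= spec_rad (clos H) (LsRa beta s Rad delta).
Proof.
set (K := clos H) in *.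
destruct (clos_bnd H Hbdd) as [Mb HMb].
assert (Kinv : forall z n, K z -> K (theta (beta n) z))
  by (intros z n Kz; apply (theta_clos gamma H Hgamma HG Hre); auto).
assert (K0 : K (RtoC 0)) by (apply (zero_clos gamma H Hgamma HG)).
set (W := fun n => Rpower (1 + Mb) (2 * s) * Rpower (Cmod (beta n)) (- (2 * s))).
assert (HW : ex_series W) by (apply (ex_series_scal_l (Rpower (1+Mb) (2*s)) _ Hsum)).
assert (Hw : forall z n, K z -> 0 <= wgt s z (beta n) <= W n).
{ intros z n Kz. apply wgt_bound; auto.
  - apply HMb; auto.
  - apply (clos_re H Hre); auto.
  - pose proof (HB n); lra. }
destruct (cont_bounded H v Hbdd Hvc) as [M HM].
assert (vM : forall z, K z -> v z <= M)
  by (intros z Kz; pose proof (HM z Kz); pose proof (Rle_abs (v z)); lra).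
destruct (cont_posmin H v Hbdd Hvc Hvpos) as [m [Hm vm]].
assert (HMp : 0 < M) by (pose proof (Hvpos _ K0); pose proof (vM _ K0); lra).
assert (Kbd : forall f : C -> C, continuous_on K f -> exists B, forall z, K z -> Cmod (f z) <= B).
{ intros f Hf. destruct (cont_bounded H (fun z => Cmod (f z)) Hbdd (cmod_cont _ f Hf)) as [B HB'].
  exists B. intros z Kz. pose proof (HB' z Kz). pose proof (Rle_abs (Cmod (f z))). lra. }
assert (f0c : continuous_on K (fun w => RtoC (v w / M))).
{ intros x Kx. apply (RtoC_lim (within K (locally x)) v (v x) M HMp). apply Hvc; auto. }
destruct Hveig as [lamc Hlam].
set (lam0 := fst lamc).
assert (Hfull : forall z, K z -> Series (fun n => wgt s z (beta n) * v (theta (beta n) z)) = lam0 * v z).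
{ intros z Kz. pose proof (f_equal fst (Hlam z Kz)) as h. unfold Ls, CSeries in h.
  unfold Cmult, RtoC in h. cbn [fst snd] in h.
  rewrite (Series_ext _ (fun n => wgt s z (beta n) * v (theta (beta n) z))) in h by (intros; ring).
  rewrite h. unfold lam0. ring. }
set (selAll := fun _ : nat => true).
set (selR := fun n => ssrbool.is_left (Rle_dec (Cmod (beta n)) Rad)).
set (selT := fun n => ssrbool.is_left (Rlt_dec Rad (Cmod (beta n)))).
assert (EqLs : Ls beta s = Gen beta s selAll 0).
{ apply functional_extensionality; intro f; apply functional_extensionality; intro z.
  unfold Gen, selAll. cbv beta iota. rewrite Cplus_0_mult. reflexivity. }
assert (EqLsRa : forall al, LsRa beta s Rad al = Gen beta s selR al).
{ intros al. apply functional_extensionality; intro f; apply functional_extensionality; intro z.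
  reflexivity. }
assert (TvAll : forall z, K z -> Tv beta s v selAll 0 z = lam0 * v z).
{ intros z Kz. unfold Tv, selAll. cbv beta iota. rewrite Rmult_0_l, Rplus_0_r. apply Hfull; auto. }
assert (Hsplit : forall z, K z ->
   Series (fun n => if selR n then wgt s z (beta n) * v (theta (beta n) z) else 0)
   + tail_sum beta s Rad v z = lam0 * v z).
{ intros z Kz. rewrite <- Hfull by auto. unfold tail_sum.
  rewrite <- Series_plus.
  - apply Series_ext. intro n. unfold selR.
    destruct (Rle_dec (Cmod (beta n)) Rad); destruct (Rlt_dec Rad (Cmod (beta n))); cbn [ssrbool.is_left]; try lra; ring.
  - apply (ex_sel K beta s v W M Kinv K0 Hw HW Hvpos vM selR z Kz).
  - apply (ex_series_ext (fun n => if selT n then wgt s z (beta n) * v (theta (beta n) z) else 0)).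
    + intro n. unfold selT. destruct (Rlt_dec Rad (Cmod (beta n))); reflexivity.
    + apply (ex_sel K beta s v W M Kinv K0 Hw HW Hvpos vM selT z Kz). }
assert (Hv0 : 0 < v (RtoC 0)) by (apply Hvpos; auto).
assert (Hlam0 : 0 <= lam0).
{ pose proof (Tv_nonneg K beta s v W M Kinv K0 Hw HW Hvpos vM selAll 0 (RtoC 0) (Rle_refl 0) K0).
  rewrite TvAll in H0 by auto. destruct (Rle_or_lt 0 lam0); auto. nra. }
assert (B1 := spec_bounds K beta s v W M Kinv K0 Hw HW Hvpos vM selAll 0 lam0 lam0 (Rle_refl 0) Hlam0 Hlam0
   (fun z Kz => Req_le _ _ (eq_sym (TvAll z Kz))) (fun z Kz => Req_le _ _ (TvAll z Kz)) m Hm vm Kbd f0c).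
assert (Hmu : 0 <= lam0 + delta * v (RtoC 0) / m).
{ assert (0 <= delta * v (RtoC 0) / m) by (apply Rmult_le_pos; [nra|left; apply Rinv_0_lt_compat; auto]). lra. }
assert (B2 : lam0 <= spec_rad K (Gen beta s selR delta) <= lam0 + delta * v (RtoC 0) / m).
{ apply (spec_bounds K beta s v W M Kinv K0 Hw HW Hvpos vM selR delta lam0 _ (Rlt_le _ _ Hdelta) Hlam0 Hmu)
    with (m := m); auto.
  - intros z Kz. unfold Tv. rewrite <- Hsplit by auto. pose proof (Htail z Kz). lra.
  - intros z Kz. unfold Tv. pose proof (Hsplit z Kz). pose proof (Htail z Kz). pose proof (vm z Kz).
    assert (delta * v (RtoC 0) <= delta * v (RtoC 0) / m * v z).
    { replace (delta * v (RtoC 0) / m * v z) with (delta * v (RtoC 0) * (v z / m)) by (field; lra).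
      assert (1 <= v z / m).
      { apply (Rmult_le_reg_l m); auto. replace (m * (v z / m)) with (v z) by (field; lra). lra. }
      assert (0 < delta * v (RtoC 0)) by nra. nra. }
    nra. }
assert (B3 : 0 <= spec_rad K (Gen beta s selR eta) <= lam0).
{ apply (spec_bounds K beta s v W M Kinv K0 Hw HW Hvpos vM selR eta 0 lam0 Heta (Rle_refl 0) Hlam0)
    with (m := m); auto.
  - intros z Kz. rewrite Rmult_0_l. apply (Tv_nonneg K beta s v W M Kinv K0 Hw HW Hvpos vM); auto.
  - intros z Kz. unfold Tv. rewrite <- Hsplit by auto. pose proof (Htail z Kz). lra. }
rewrite EqLs, !EqLsRa. lra.
Qed.
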